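(* Let $(B,\le)$ be a properly ordered Bratteli diagram with $V_0=\{v^0\}$, $V_k=\{v_1^k,\dots,v_{n(k)}^k\}$, whose minimal path $e_{\min}=(e_1,e_2,\dots)$ satisfies $r(e_k)=v_1^k$ for all $k\ge1$, and let $(X_B,T_B)$ be the associated Bratteli–Vershik system. Then $(X_B,T_B)$ is weakly mixing if and only if for every $k\ge1$ there exists $n$ with $\{n,n+1\}\subseteq\mathcal N(C(e^k),C(e^k))$, where $e^k=(e_1,\dots,e_k)$.
   Context: Bratteli diagram: levels $V_k$, edges $E_k$ with $s(E_k)\subseteq V_{k-1}$, $r(E_k)\subseteq V_k$. An ordering linearly orders each $r^{-1}(v)$; finite paths between levels are ordered by comparing the last differing edge. $X_B$ is the space of infinite paths $(e_1,e_2,\dots)$ with $r(e_i)=s(e_{i+1})$; for a finite path $a=(a_1,\dots,a_k)$ from $v^0$, $C(a)$ is the cylinder of infinite paths beginning with $a$. Properly ordered: the diagram is simple and there are unique all-maximal and all-minimal infinite paths $x_{\max},x_{\min}$. The Vershik map $T_B$ sends $x_{\max}\mapsto x_{\min}$ and otherwise replaces the first non-maximal edge $e_k$ by its successor $f_k$ and $(e_1,\dots,e_{k-1})$ by the minimal path from $v^0$ to $s(f_k)$. $\mathcal N(U,W)=\{n\in\mathbb Z:T_B^nU\cap W\ne\emptyset\}$. Weakly mixing: $(X_B\times X_B,T_B\times T_B)$ is topologically transitive. *)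

(* Defs.v *)
From Stdlib Require Import Arith ZArith ClassicalEpsilon.

(* A Bratteli diagram, encoded with natural-number labels.
   - Level k has vertices 0, ..., nv k - 1  (vertex i stands for v^k_{i+1}).
   - "Edge index k" is the edge set E_{k+1} from level k to level k+1; its
     edges are 0, ..., ne k - 1, with source  src k e  (a vertex of level k)
     and range  rng k e  (a vertex of level k+1).
   - The ordering: two edges e, f of E_{k+1} with the same range are ordered
     by  rank k e < rank k f  (rank is required injective on each r^{-1}(v)),
     so each r^{-1}(v) is linearly ordered; every finite linear order arises so. *)
Record Bratteli := {
  nv : nat -> nat;
  ne : nat -> nat;
  src : nat -> nat -> nat;
  rng : nat -> nat -> nat;
  rank : nat -> nat -> nat
}.

Definition is_ordered_bratteli (B : Bratteli) : Prop :=
  nv B 0 = 1 /\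
  (forall k, 0 < nv B k) /\
  (forall k e, e < ne B k -> src B k e < nv B k /\ rng B k e < nv B (S k)) /\
  (forall k v, v < nv B k -> exists e, e < ne B k /\ src B k e = v) /\
  (forall k w, w < nv B (S k) -> exists e, e < ne B k /\ rng B k e = w) /\
  (forall k e f, e < ne B k -> f < ne B k -> rng B k e = rng B k f ->
     rank B k e = rank B k f -> e = f).

(* Infinite paths (x 0, x 1, ...) = (e_1, e_2, ...) : the space X_B. *)
Definition is_path (B : Bratteli) (x : nat -> nat) : Prop :=
  (forall k, x k < ne B k) /\
  (forall k, rng B k (x k) = src B (S k) (x (S k))).

Definition max_edge (B : Bratteli) (k e : nat) : Prop :=
  forall f, f < ne B k -> rng B k f = rng B k e -> rank B k f <= rank B k e.

Definition min_edge (B : Bratteli) (k e : nat) : Prop :=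
  forall f, f < ne B k -> rng B k f = rng B k e -> rank B k e <= rank B k f.

Definition all_max (B : Bratteli) (x : nat -> nat) : Prop :=
  forall k, max_edge B k (x k).

Definition all_min (B : Bratteli) (x : nat -> nat) : Prop :=
  forall k, min_edge B k (x k).

Definition connected (B : Bratteli) (k l v w : nat) : Prop :=
  k < l /\
  exists p : nat -> nat,
    (forall j, k <= j -> j < l -> p j < ne B j) /\
    src B k (p k) = v /\
    rng B (l - 1) (p (l - 1)) = w /\
    (forall j, k <= j -> S j < l -> rng B j (p j) = src B (S j) (p (S j))).

(* Simple: after telescoping, all incidence matrices are strictly positive. *)
Definition simple (B : Bratteli) : Prop :=
  forall k, exists l, k < l /\
    forall v w, v < nv B k -> w < nv B l -> connected B k l v w.

Definition properly_ordered (B : Bratteli) : Prop :=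
  is_ordered_bratteli B /\ simple B /\
  (exists x, is_path B x /\ all_max B x /\
     forall y, is_path B y -> all_max B y -> forall k, y k = x k) /\
  (exists x, is_path B x /\ all_min B x /\
     forall y, is_path B y -> all_min B y -> forall k, y k = x k).

(* The minimal and maximal infinite paths (well defined when properly ordered). *)
Definition xmin (B : Bratteli) : nat -> nat :=
  epsilon (inhabits (fun _ => 0)) (fun x => is_path B x /\ all_min B x).

Definition min_in (B : Bratteli) (k w : nat) : nat :=
  epsilon (inhabits 0)
    (fun e => e < ne B k /\ rng B k e = w /\ min_edge B k e).

Definition succ_edge (B : Bratteli) (k e : nat) : nat :=
  epsilon (inhabits 0)
    (fun f => f < ne B k /\ rng B k f = rng B k e /\ rank B k e < rank B k f /\
       forall g, g < ne B k -> rng B k g = rng B k e -> rank B k e < rank B k g ->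
         rank B k f <= rank B k g).

(* The minimal finite path from v^0 to vertex w of level k: its edges are the
   coordinates 0 .. k-1 (other coordinates are irrelevant). *)
Fixpoint min_path (B : Bratteli) (k w : nat) : nat -> nat :=
  match k with
  | 0 => fun _ => 0
  | S k' => fun j =>
      if Nat.eqb j k' then min_in B k' w
      else min_path B k' (src B k' (min_in B k' w)) j
  end.

Definition first_nonmax (B : Bratteli) (x : nat -> nat) : nat :=
  epsilon (inhabits 0)
    (fun k => ~ max_edge B k (x k) /\ forall j, j < k -> max_edge B j (x j)).

Definition vershik (B : Bratteli) (x : nat -> nat) : nat -> nat :=
  if excluded_middle_informative (all_max B x) then xmin B
  else
    let k := first_nonmax B x in
    let f := succ_edge B k (x k) in
    fun j => if Nat.ltb j k then min_path B k (src B k f) j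
             else if Nat.eqb j k then f else x j.

Definition cylinder (B : Bratteli) (k : nat) (x : nat -> nat) : (nat -> nat) -> Prop :=
  fun y => is_path B y /\ forall j, j < k -> y j = x j.

Definition open2 (B : Bratteli) (O : (nat -> nat) * (nat -> nat) -> Prop) : Prop :=
  (forall p, O p -> is_path B (fst p) /\ is_path B (snd p)) /\
  forall p, O p -> exists k, forall y z,
     cylinder B k (fst p) y -> cylinder B k (snd p) z -> O (y, z).

(* n in N(U,W) for a homeomorphism f:  f^n U meets W.  For n < 0 this is
   written equivalently (f bijective) as: W meets f^{|n|}-preimage ... i.e.
   some w in W has f^{|n|} w in U. *)
Definition return_time {A : Type} (f : A -> A) (U W : A -> Prop) (n : Z) : Prop :=
  if Z.leb 0 n then exists a, U a /\ W (Nat.iter (Z.abs_nat n) f a)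
  else exists a, W a /\ U (Nat.iter (Z.abs_nat n) f a).

Definition prod_map {A : Type} (f : A -> A) (p : A * A) : A * A :=
  (f (fst p), f (snd p)).

Definition weakly_mixing (B : Bratteli) : Prop :=
  forall U W, open2 B U -> open2 B W -> (exists p, U p) -> (exists p, W p) ->
    exists n : Z, return_time (prod_map (vershik B)) U W n.

(* Main.v *)
Require Import Defs.
From Stdlib Require Import Arith ZArith Lia Classical ClassicalEpsilon.

Lemma nat_min (Q : nat -> Prop) : (exists n, Q n) -> exists n, Q n /\ forall m, Q m -> n <= m.
Proof.
  intros [n Hn]. induction n as [n IH] using (well_founded_induction lt_wf).
  destruct (classic (exists m, m < n /\ Q m)) as [[m [Hm1 Hm2]]|Hno].
  - exact (IH m Hm1 Hm2).
  - exists n. split; auto. intros m Hm. destruct (le_lt_dec n m); auto.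
    exfalso; apply Hno; eauto.
Qed.

Lemma bounded_max (Q : nat -> Prop) (Bd : nat) : (exists n, Q n) -> (forall n, Q n -> n <= Bd) ->
  exists n, Q n /\ forall m, Q m -> m <= n.
Proof.
  intros [n Hn] Hb.
  destruct (nat_min (fun k => k <= Bd /\ Q (Bd - k))) as [k [[Hk1 Hk2] Hk3]].
  { exists (Bd - n). split; [lia|]. replace (Bd - (Bd - n)) with n; auto. specialize (Hb n Hn); lia. }
  exists (Bd - k). split; auto. intros m Hm. specialize (Hb m Hm).
  assert (k <= Bd - m). { apply Hk3. split; [lia|]. replace (Bd - (Bd - m)) with m by lia; auto. }
  lia.
Qed.

Lemma fun_bound (f : nat -> nat) (N : nat) : exists Bd, forall e, e < N -> f e <= Bd.
Proof.
  induction N as [|N [Bd HB]].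
  - exists 0; intros; lia.
  - exists (Nat.max Bd (f N)). intros e He. destruct (Nat.eq_dec e N).
    + subst; lia.
    + assert (e < N) by lia. specialize (HB e H). lia.
Qed.

Lemma argmin_rank (r : nat -> nat) (P : nat -> Prop) (N : nat) :
  (exists e, e < N /\ P e) -> exists e, e < N /\ P e /\ forall f, f < N -> P f -> r e <= r f.
Proof.
  intros Hex.
  destruct (nat_min (fun v => exists e, e < N /\ P e /\ r e = v)) as [v [[e [He1 [He2 He3]]] Hv]].
  { destruct Hex as [e [? ?]]; eauto. }
  exists e; repeat split; auto. intros f Hf HP. subst. apply Hv; eauto.
Qed.

Lemma argmax_rank (r : nat -> nat) (P : nat -> Prop) (N : nat) :
  (exists e, e < N /\ P e) -> exists e, e < N /\ P e /\ forall f, f < N -> P f -> r f <= r e.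
Proof.
  intros Hex. destruct (fun_bound r N) as [Bd HB].
  destruct (bounded_max (fun v => exists e, e < N /\ P e /\ r e = v) Bd) as [v [[e [He1 [He2 He3]]] Hv]].
  { destruct Hex as [e [? ?]]; eauto. }
  { intros n [e [? [? ?]]]; subst; auto. }
  exists e; repeat split; auto. intros f Hf HP. subst. apply Hv; eauto.
Qed.

Lemma pigeon (N : nat) (Q : nat -> nat -> Prop) :
  (forall L, exists l, L <= l /\ exists v, v < N /\ Q l v) ->
  exists v, v < N /\ forall L, exists l, L <= l /\ Q l v.
Proof.
  revert Q; induction N as [|N IH]; intros Q H.
  - destruct (H 0) as [l [_ [v [Hv _]]]]; lia.
  - destruct (classic (forall L, exists l, L <= l /\ Q l N)) as [Hy|Hn].
    + exists N; split; auto.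
    + apply not_all_ex_not in Hn. destruct Hn as [L0 HL0].
      destruct (IH Q) as [v [Hv1 Hv2]].
      * intros L. destruct (H (Nat.max L L0)) as [l [Hl [v [Hv HQ]]]].
        exists l; split; [lia|]. exists v; split; auto.
        destruct (Nat.eq_dec v N); [|lia]. subst. exfalso; apply HL0. exists l; split; [lia|auto].
      * exists v; split; auto.
Qed.

Definition fpath (B : Bratteli) (k : nat) (p : nat -> nat) (w : nat) : Prop :=
  (forall j, j < k -> p j < ne B j) /\
  (forall j, S j < k -> rng B j (p j) = src B (S j) (p (S j))) /\
  (forall j, S j = k -> rng B j (p j) = w) /\ w < nv B k.

Lemma min_unique B (HB : is_ordered_bratteli B) k e f :
  e < ne B k -> f < ne B k -> rng B k e = rng B k f -> min_edge B k e -> min_edge B k f -> e = f.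
Proof.
  intros He Hf Hr Me Mf. destruct HB as [_ [_ [_ [_ [_ Hinj]]]]].
  apply (Hinj k e f He Hf Hr). specialize (Me f Hf (eq_sym Hr)). specialize (Mf e He Hr). lia.
Qed.

Lemma max_unique B (HB : is_ordered_bratteli B) k e f :
  e < ne B k -> f < ne B k -> rng B k e = rng B k f -> max_edge B k e -> max_edge B k f -> e = f.
Proof.
  intros He Hf Hr Me Mf. destruct HB as [_ [_ [_ [_ [_ Hinj]]]]].
  apply (Hinj k e f He Hf Hr). specialize (Me f Hf (eq_sym Hr)). specialize (Mf e He Hr). lia.
Qed.

Lemma min_in_spec B (HB : is_ordered_bratteli B) k w : w < nv B (S k) ->
  min_in B k w < ne B k /\ rng B k (min_in B k w) = w /\ min_edge B k (min_in B k w).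
Proof.
  intros Hw. unfold min_in. apply epsilon_spec.
  destruct HB as [_ [_ [_ [_ [Hin _]]]]].
  destruct (argmin_rank (rank B k) (fun e => rng B k e = w) (ne B k)) as [e [He1 [He2 He3]]].
  { destruct (Hin k w Hw) as [e [? ?]]; eauto. }
  exists e; repeat split; auto. intros f Hf Hr. apply He3; auto. congruence.
Qed.

Lemma min_in_eq B (HB : is_ordered_bratteli B) k e :
  e < ne B k -> min_edge B k e -> min_in B k (rng B k e) = e.
Proof.
  intros He Me. assert (Hw : rng B k e < nv B (S k)).
  { destruct HB as [_ [_ [Hok _]]]. apply (Hok k e He). }
  destruct (min_in_spec B HB k _ Hw) as [A1 [A2 A3]].
  apply (min_unique B HB k); auto.
Qed.

Lemma path_fpath B x k : is_ordered_bratteli B -> is_path B x -> fpath B k x (src B k (x k)).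
Proof.
  intros HB [Hx1 Hx2]. repeat split; auto.
  - intros j Hj. subst k. apply Hx2.
  - destruct HB as [_ [_ [Hok _]]]. apply (Hok k (x k) (Hx1 k)).
Qed.

Lemma min_path_spec B (HB : is_ordered_bratteli B) k w : w < nv B k ->
  fpath B k (min_path B k w) w /\ forall j, j < k -> min_edge B j (min_path B k w j).
Proof.
  revert w; induction k as [|k IH]; intros w Hw.
  - repeat split; intros; lia.
  - destruct (min_in_spec B HB k w Hw) as [E1 [E2 E3]].
    set (e := min_in B k w) in *.
    assert (Hs : src B k e < nv B k).
    { destruct HB as [_ [_ [Hok _]]]. apply (Hok k e E1). }
    destruct (IH _ Hs) as [[F1 [F2 [F3 F4]]] M].
    assert (Heq : forall j, min_path B (S k) w j = if Nat.eqb j k then e else min_path B k (src B k e) j) by reflexivity.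
    repeat split.
    + intros j Hj. rewrite Heq. destruct (Nat.eqb_spec j k) as [->|]; auto. apply F1; lia.
    + intros j Hj. rewrite !Heq. destruct (Nat.eqb_spec j k); [lia|].
      destruct (Nat.eqb_spec (S j) k).
      * rewrite e0; apply F3; auto.
      * apply F2; lia.
    + intros j Hj. assert (j = k) as -> by lia. rewrite Heq, Nat.eqb_refl. auto.
    + auto.
    + intros j Hj. rewrite Heq. destruct (Nat.eqb_spec j k) as [->|]; auto. apply M; lia.
Qed.

Lemma min_path_unique B (HB : is_ordered_bratteli B) k : forall p w, fpath B k p w ->
  (forall j, j < k -> min_edge B j (p j)) -> forall j, j < k -> p j = min_path B k w j.
Proof.
  induction k as [|k IH]; intros p w [F1 [F2 [F3 F4]]] M j Hj; [lia|].
  assert (Hpk : p k = min_in B k w).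
  { rewrite <- (F3 k eq_refl). symmetry. apply min_in_eq; auto. }
  change (min_path B (S k) w j) with (if Nat.eqb j k then min_in B k w else min_path B k (src B k (min_in B k w)) j).
  destruct (Nat.eqb_spec j k); subst; auto.
  rewrite <- Hpk. apply (IH p (src B k (p k))); try lia.
  - repeat split.
    + intros; apply F1; lia.
    + intros; apply F2; lia.
    + intros i Hi; subst; apply F2; lia.
    + destruct HB as [_ [_ [Hok _]]]. apply (Hok k (p k) (F1 k ltac:(lia))).
  - intros; apply M; lia.
Qed.

Lemma max_path_exists B (HB : is_ordered_bratteli B) k : forall w, w < nv B k ->
  exists p, fpath B k p w /\ forall j, j < k -> max_edge B j (p j).
Proof.
  induction k as [|k IH]; intros w Hw.
  - exists (fun _ => 0). repeat split; intros; lia.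
  - destruct (argmax_rank (rank B k) (fun e => rng B k e = w) (ne B k)) as [e [He1 [He2 He3]]].
    { destruct HB as [_ [_ [_ [_ [Hin _]]]]]. destruct (Hin k w Hw) as [e [? ?]]; eauto. }
    assert (Hs : src B k e < nv B k).
    { destruct HB as [_ [_ [Hok _]]]. apply (Hok k e He1). }
    destruct (IH _ Hs) as [p [[F1 [F2 [F3 F4]]] M]].
    exists (fun j => if Nat.eqb j k then e else p j). repeat split.
    + intros j Hj. destruct (Nat.eqb_spec j k); subst; auto. apply F1; lia.
    + intros j Hj. destruct (Nat.eqb_spec j k); [lia|].
      destruct (Nat.eqb_spec (S j) k).
      * rewrite e0; apply F3; auto.
      * apply F2; lia.
    + intros j Hj. assert (j = k) by lia. subst. rewrite Nat.eqb_refl. auto.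
    + auto.
    + intros j Hj. destruct (Nat.eqb_spec j k); subst.
      * intros f Hf Hr. apply He3; auto; congruence.
      * apply M; lia.
Qed.

Lemma xmin_spec B : properly_ordered B -> is_path B (xmin B) /\ all_min B (xmin B).
Proof.
  intros [_ [_ [_ [x [Hx1 [Hx2 _]]]]]]. unfold xmin. apply epsilon_spec. eauto.
Qed.

Lemma xmin_unique B : properly_ordered B -> forall y, is_path B y -> all_min B y -> forall k, y k = xmin B k.
Proof.
  intros HP y Hy1 Hy2 k. pose proof (xmin_spec B HP) as [Hm1 Hm2].
  destruct HP as [_ [_ [_ [x [Hx1 [Hx2 Hu]]]]]].
  rewrite (Hu y Hy1 Hy2 k), (Hu _ Hm1 Hm2 k). reflexivity.
Qed.

Lemma xmin_src0 B : properly_ordered B -> (forall k, rng B k (xmin B k) = 0) ->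
  forall L, src B L (xmin B L) = 0.
Proof.
  intros HP Hr L. pose proof (xmin_spec B HP) as [[Hx1 Hx2] _].
  destruct L as [|L].
  - destruct HP as [[Hnv0 [_ [Hok _]]] _]. pose proof (Hok 0 _ (Hx1 0)). lia.
  - rewrite <- Hx2. apply Hr.
Qed.

Lemma xmin_prefix B : properly_ordered B -> (forall k, rng B k (xmin B k) = 0) ->
  forall L j, j < L -> xmin B j = min_path B L 0 j.
Proof.
  intros HP Hr L j Hj. pose proof (xmin_spec B HP) as [Hx1 Hx2].
  assert (HB : is_ordered_bratteli B) by apply HP.
  rewrite <- (xmin_src0 B HP Hr L).
  apply min_path_unique; auto. apply path_fpath; auto.
Qed.

Definition FN B x k := ~ max_edge B k (x k) /\ forall j, j < k -> max_edge B j (x j).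

Lemma fn_spec B x : ~ all_max B x -> FN B x (first_nonmax B x).
Proof.
  intros Hn. unfold first_nonmax. apply epsilon_spec.
  destruct (nat_min (fun k => ~ max_edge B k (x k))) as [k [Hk1 Hk2]].
  { apply not_all_ex_not in Hn. exact Hn. }
  exists k. split; auto. intros j Hj. apply NNPP. intros Hc. specialize (Hk2 j Hc). lia.
Qed.

Lemma fn_eq B x k : ~ all_max B x -> FN B x k -> first_nonmax B x = k.
Proof.
  intros Hn [H1 H2]. destruct (fn_spec B x Hn) as [G1 G2].
  set (k' := first_nonmax B x) in *.
  destruct (lt_eq_lt_dec k' k) as [[Hl|He]|Hl]; auto.
  - exfalso; apply G1; apply H2; auto.
  - exfalso; apply H1; apply G2; auto.
Qed.

Definition SUCC B k e f := f < ne B k /\ rng B k f = rng B k e /\ rank B k e < rank B k f /\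
       forall g, g < ne B k -> rng B k g = rng B k e -> rank B k e < rank B k g ->
         rank B k f <= rank B k g.

Lemma succ_spec B k e : e < ne B k -> ~ max_edge B k e -> SUCC B k e (succ_edge B k e).
Proof.
  intros He Hn. unfold succ_edge. apply epsilon_spec.
  destruct (argmin_rank (rank B k) (fun f => rng B k f = rng B k e /\ rank B k e < rank B k f) (ne B k))
    as [f [Hf1 [[Hf2 Hf3] Hf4]]].
  { apply NNPP; intros Hc; apply Hn. intros f Hf Hr. apply NNPP; intros Hc2. apply Hc.
    exists f; split; auto; split; auto; lia. }
  exists f; repeat split; auto.
Qed.

Lemma succ_unique B (HB : is_ordered_bratteli B) k e f f' : SUCC B k e f -> SUCC B k e f' -> f = f'.
Proof.
  intros [A1 [A2 [A3 A4]]] [B1 [B2 [B3 B4]]].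
  destruct HB as [_ [_ [_ [_ [_ Hinj]]]]]. apply (Hinj k); auto; try congruence.
  specialize (A4 f' B1 B2 B3). specialize (B4 f A1 A2 A3). lia.
Qed.

Lemma vershik_max B x : all_max B x -> vershik B x = xmin B.
Proof.
  intros H. unfold vershik. destruct (excluded_middle_informative (all_max B x)); tauto.
Qed.

Lemma vershik_nonmax B x : ~ all_max B x ->
  vershik B x = (fun j => if Nat.ltb j (first_nonmax B x)
    then min_path B (first_nonmax B x) (src B (first_nonmax B x) (succ_edge B (first_nonmax B x) (x (first_nonmax B x)))) j
    else if Nat.eqb j (first_nonmax B x) then succ_edge B (first_nonmax B x) (x (first_nonmax B x)) else x j).
Proof.
  intros H. unfold vershik. destruct (excluded_middle_informative (all_max B x)); tauto.
Qed.

Lemma is_path_ext B x y : (forall j, x j = y j) -> is_path B x -> is_path B y.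
Proof.
  intros E [H1 H2]. split; intros k.
  - rewrite <- E; auto.
  - rewrite <- !E; auto.
Qed.

Lemma splice_path B k p w y : fpath B k p w ->
  (forall j, k <= j -> y j < ne B j) ->
  (forall j, k <= j -> rng B j (y j) = src B (S j) (y (S j))) ->
  src B k (y k) = w ->
  is_path B (fun j => if Nat.ltb j k then p j else y j).
Proof.
  intros [F1 [F2 [F3 F4]]] Y1 Y2 Y3. split.
  - intros j. destruct (Nat.ltb_spec j k); [apply F1; auto | apply Y1; lia].
  - intros j. destruct (Nat.ltb_spec j k); destruct (Nat.ltb_spec (S j) k).
    + apply F2; auto.
    + assert (S j = k) by lia. rewrite F3; auto. subst; auto.
    + lia.
    + apply Y2; lia.
Qed.

Lemma vershik_path B (HP : properly_ordered B) x : is_path B x -> is_path B (vershik B x).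
Proof.
  intros Hx. assert (HB : is_ordered_bratteli B) by apply HP.
  destruct (classic (all_max B x)) as [Hm|Hm].
  - rewrite vershik_max; auto. apply xmin_spec; auto.
  - rewrite vershik_nonmax; auto.
    destruct (fn_spec B x Hm) as [N1 N2].
    set (k := first_nonmax B x) in *.
    destruct Hx as [Hx1 Hx2].
    destruct (succ_spec B k (x k) (Hx1 k) N1) as [S1 [S2 [S3 S4]]].
    set (f := succ_edge B k (x k)) in *.
    assert (Hs : src B k f < nv B k).
    { destruct HB as [_ [_ [Hok _]]]. apply (Hok k f S1). }
    apply (splice_path B k _ (src B k f) _ (proj1 (min_path_spec B HB k _ Hs))).
    + intros j Hj. destruct (Nat.eqb_spec j k) as [->|]; auto.
    + intros j Hj. destruct (Nat.eqb_spec j k); destruct (Nat.eqb_spec (S j) k); try lia.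
      * subst j. rewrite S2. apply Hx2.
      * apply Hx2.
    + rewrite Nat.eqb_refl. auto.
Qed.

Lemma iter_path B (HP : properly_ordered B) n x : is_path B x -> is_path B (Nat.iter n (vershik B) x).
Proof.
  intros Hx; induction n; simpl; auto. apply vershik_path; auto.
Qed.

Lemma fpath_restrict B (HB : is_ordered_bratteli B) l b w : fpath B (S l) b w ->
  fpath B l b (src B l (b l)).
Proof.
  intros [F1 [F2 [F3 F4]]]. repeat split.
  - intros; apply F1; lia.
  - intros; apply F2; lia.
  - intros j Hj; subst; apply F2; lia.
  - destruct HB as [_ [_ [Hok _]]]. apply (Hok l (b l) (F1 l ltac:(lia))).
Qed.

Lemma tower B (HP : properly_ordered B) : forall l w b, fpath B l b w ->
  exists a, forall x, is_path B x -> (forall j, j < l -> x j = min_path B l w j) ->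
    forall j, Nat.iter a (vershik B) x j = (if Nat.ltb j l then b j else x j).
Proof.
  assert (HB : is_ordered_bratteli B) by apply HP.
  induction l as [|l IHl].
  - intros w b _. exists 0. intros x _ _ j. reflexivity.
  - intros w.
    assert (Main : forall n f b, rank B l f = n -> fpath B (S l) b w -> b l = f ->
      exists a, forall x, is_path B x -> (forall j, j < S l -> x j = min_path B (S l) w j) ->
       forall j, Nat.iter a (vershik B) x j = (if Nat.ltb j (S l) then b j else x j)).
    2:{ intros b Hb. eapply Main; eauto. }
    intros n. induction n as [n IHn] using (well_founded_induction lt_wf).
    intros f b Hn Hb Hbl.
    pose proof Hb as [F1 [F2 [F3 F4]]].
    assert (Hf : f < ne B l) by (subst f; apply F1; lia).
    assert (Hfw : rng B l f = w) by (subst f; apply F3; auto).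
    pose proof (fpath_restrict B HB l b w Hb) as Hbr. rewrite Hbl in Hbr.
    destruct (IHl _ _ Hbr) as [a2 Ha2].
    destruct (classic (min_edge B l f)) as [Hmin|Hmin].
    + exists a2. intros x Hx Hpre j.
      assert (Hmi : min_in B l w = f) by (rewrite <- Hfw; apply min_in_eq; auto).
      rewrite (Ha2 x Hx).
      * destruct (Nat.ltb_spec j l); destruct (Nat.ltb_spec j (S l)); auto; try lia.
        assert (j = l) by lia. subst j. rewrite Hpre by lia. simpl. rewrite Nat.eqb_refl. congruence.
      * intros j0 Hj0. rewrite Hpre by lia. simpl.
        destruct (Nat.eqb_spec j0 l); [lia|]. rewrite Hmi. reflexivity.
    + assert (Hex : exists g, g < ne B l /\ (rng B l g = w /\ rank B l g < rank B l f)).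
      { apply NNPP; intros Hc; apply Hmin. intros g Hg Hr. apply NNPP; intros Hc2; apply Hc.
        exists g; repeat split; auto; [congruence|lia]. }
      destruct (argmax_rank (rank B l) _ _ Hex) as [g [Hg1 [[Hg2 Hg3] Hg4]]].
      assert (HS : SUCC B l g f).
      { repeat split; auto; try congruence.
        intros h Hh Hr Hlt. destruct (le_lt_dec (rank B l f) (rank B l h)); auto.
        specialize (Hg4 h Hh (conj (eq_trans Hr Hg2) l0)). lia. }
      assert (Hgnm : ~ max_edge B l g).
      { intros Hm. specialize (Hm f Hf (eq_trans Hfw (eq_sym Hg2))). lia. }
      assert (Hsucc : succ_edge B l g = f).
      { apply (succ_unique B HB l g); auto. apply succ_spec; auto. }
      assert (Hu' : src B l g < nv B l).
      { destruct HB as [_ [_ [Hok _]]]. apply (Hok l g Hg1). }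
      destruct (max_path_exists B HB l _ Hu') as [mx [[M1 [M2 [M3 M4]]] Mmax]].
      set (b' := fun j => if Nat.eqb j l then g else mx j).
      assert (Hb' : fpath B (S l) b' w).
      { unfold b'. repeat split.
        - intros j Hj. destruct (Nat.eqb_spec j l) as [->|]; auto. apply M1; lia.
        - intros j Hj. destruct (Nat.eqb_spec j l); [lia|]. destruct (Nat.eqb_spec (S j) l).
          + rewrite M3; auto.
          + apply M2; lia.
        - intros j Hj. assert (j = l) as -> by lia. rewrite Nat.eqb_refl. auto.
        - auto. }
      assert (Hlt : rank B l g < n) by lia.
      destruct (IHn _ Hlt g b' eq_refl Hb') as [a1 Ha1].
      { unfold b'. rewrite Nat.eqb_refl. auto. }
      exists (a2 + S a1). intros x Hx Hpre j.
      rewrite Nat.iter_add. simpl (Nat.iter (S a1) _ _).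
      set (y := Nat.iter a1 (vershik B) x).
      assert (Hy : forall j, y j = if Nat.ltb j (S l) then b' j else x j) by (apply Ha1; auto).
      assert (Hyp : is_path B y) by (apply iter_path; auto).
      assert (Hyl : y l = g).
      { rewrite Hy. destruct (Nat.ltb_spec l (S l)); [|lia]. unfold b'. rewrite Nat.eqb_refl. auto. }
      assert (HFN : FN B y l).
      { split.
        - rewrite Hyl; auto.
        - intros j0 Hj0. rewrite Hy. destruct (Nat.ltb_spec j0 (S l)); [|lia].
          unfold b'. destruct (Nat.eqb_spec j0 l); [lia|]. apply Mmax; auto. }
      assert (Hnm : ~ all_max B y) by (intros Hc; apply (proj1 HFN); apply Hc).
      assert (HTy : forall j, vershik B y j = if Nat.ltb j l then min_path B l (src B l f) j
                                              else if Nat.eqb j l then f else y j).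
      { intros j0. rewrite vershik_nonmax by auto. rewrite (fn_eq B y l Hnm HFN), Hyl, Hsucc. reflexivity. }
      rewrite (Ha2 (vershik B y)).
      * rewrite HTy. destruct (Nat.ltb_spec j l); destruct (Nat.ltb_spec j (S l)); try lia; auto.
        -- assert (j = l) as -> by lia. rewrite Nat.eqb_refl. auto.
        -- destruct (Nat.eqb_spec j l); [lia|]. rewrite Hy. destruct (Nat.ltb_spec j (S l)); [lia|]. auto.
      * apply vershik_path; auto.
      * intros j0 Hj0. rewrite HTy. destruct (Nat.ltb_spec j0 l); [auto|lia].
Qed.

Definition anc B K l w := src B K (min_path B l w K).

Lemma fpath_restrict_gen B (HB : is_ordered_bratteli B) l p w K : fpath B l p w -> K < l ->
  fpath B K p (src B K (p K)).
Proof.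
  intros [F1 [F2 [F3 F4]]] HK. repeat split.
  - intros; apply F1; lia.
  - intros; apply F2; lia.
  - intros j Hj; subst; apply F2; lia.
  - destruct HB as [_ [_ [Hok _]]]. apply (Hok K (p K) (F1 K HK)).
Qed.

Lemma prefix_minpath B (HB : is_ordered_bratteli B) K l w : K < l -> w < nv B l ->
  forall j, j < K -> min_path B l w j = min_path B K (anc B K l w) j.
Proof.
  intros HK Hw. destruct (min_path_spec B HB l w Hw) as [Hf Hm].
  apply min_path_unique; auto.
  - apply (fpath_restrict_gen B HB l _ w K Hf HK).
  - intros; apply Hm; lia.
Qed.

Lemma anc_lt B (HB : is_ordered_bratteli B) K l w : K < l -> w < nv B l -> anc B K l w < nv B K.
Proof.
  intros HK Hw. destruct (min_path_spec B HB l w Hw) as [[F1 _] _].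
  destruct HB as [_ [_ [Hok _]]]. apply (Hok K _ (F1 K HK)).
Qed.

Lemma anc_step B (HB : is_ordered_bratteli B) K l w : S K < l -> w < nv B l ->
  anc B K l w = src B K (min_in B K (anc B (S K) l w)).
Proof.
  intros HK Hw. destruct (min_path_spec B HB l w Hw) as [[F1 [F2 _]] Hm].
  unfold anc at 2. rewrite <- F2 by auto. rewrite min_in_eq; auto. apply F1; lia. apply Hm; lia.
Qed.

Definition desc B k v := forall L, exists l, L <= l /\ exists w, w < nv B l /\ k < l /\ anc B k l w = v.

Lemma desc_step B (HB : is_ordered_bratteli B) k v : desc B k v ->
  exists c, c < nv B (S k) /\ src B k (min_in B k c) = v /\ desc B (S k) c.
Proof.
  intros Hd.
  destruct (pigeon (nv B (S k)) (fun l c => exists w, w < nv B l /\ S k < l /\ anc B (S k) l w = c /\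
       src B k (min_in B k c) = v)) as [c [Hc1 Hc2]].
  - intros L. destruct (Hd (Nat.max L (S (S k)))) as [l0 [Hl [w [Hw [Hkl Ha]]]]].
    exists l0; split; [lia|]. exists (anc B (S k) l0 w). split.
    + apply anc_lt; auto; lia.
    + exists w; repeat split; auto; try lia. rewrite <- anc_step; auto; lia.
  - exists c; split; auto. destruct (Hc2 0) as [l0 [_ [w [_ [_ [_ H]]]]]]. split; auto.
    intros L. destruct (Hc2 L) as [l1 [Hl [w1 [Hw [H1 [H2 _]]]]]]. exists l1; split; auto. exists w1; auto.
Qed.

Definition ch B k v := epsilon (inhabits 0)
  (fun c => c < nv B (S k) /\ src B k (min_in B k c) = v /\ desc B (S k) c).

Fixpoint branch B K v0 n := match n with 0 => v0 | S n => ch B (K + n) (branch B K v0 n) end.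

Lemma ch_spec B (HB : is_ordered_bratteli B) k v : desc B k v ->
  ch B k v < nv B (S k) /\ src B k (min_in B k (ch B k v)) = v /\ desc B (S k) (ch B k v).
Proof.
  intros Hd. unfold ch. apply epsilon_spec. apply desc_step; auto.
Qed.

Lemma branch_desc B (HB : is_ordered_bratteli B) K v0 : desc B K v0 -> forall n,
  desc B (K + n) (branch B K v0 n).
Proof.
  intros Hd n. induction n as [|n IH].
  - rewrite Nat.add_0_r. exact Hd.
  - simpl. rewrite Nat.add_succ_r. apply ch_spec; auto.
Qed.

Lemma branch_spec B (HB : is_ordered_bratteli B) K v0 : desc B K v0 -> forall n,
  branch B K v0 (S n) < nv B (S (K + n)) /\
  src B (K + n) (min_in B (K + n) (branch B K v0 (S n))) = branch B K v0 n.
Proof.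
  intros Hd n. pose proof (ch_spec B HB _ _ (branch_desc B HB K v0 Hd n)). simpl. tauto.
Qed.

Lemma konig B (HP : properly_ordered B) (Hr : forall k, rng B k (xmin B k) = 0) K :
  exists L, forall l, L <= l -> K < l -> forall w, w < nv B l -> anc B K l w = 0.
Proof.
  assert (HB : is_ordered_bratteli B) by apply HP.
  apply NNPP; intros Hc.
  destruct (pigeon (nv B K) (fun l v => exists w, w < nv B l /\ K < l /\ anc B K l w = v /\ v <> 0))
    as [v0 [Hv0 Hd0]].
  { intros L. apply NNPP; intros Hc2. apply Hc. exists (Nat.max L (S K)).
    intros l Hl HKl w Hw. apply NNPP; intros Hne. apply Hc2. exists l; split; [lia|].
    exists (anc B K l w); split; [apply anc_lt; auto|]. exists w; auto. }
  assert (Hnz : v0 <> 0) by (destruct (Hd0 0) as [l [_ [w [_ [_ [_ H]]]]]]; auto).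
  assert (Hd : desc B K v0).
  { intros L. destruct (Hd0 L) as [l [Hl [w [Hw [H1 [H2 _]]]]]]. exists l; split; auto. exists w; auto. }
  pose proof (branch_spec B HB K v0 Hd) as BS.
  set (yt := fun j => min_in B j (branch B K v0 (S (j - K)))).
  assert (Yne : forall j, K <= j -> yt j < ne B j /\ rng B j (yt j) = branch B K v0 (S (j - K)) /\ min_edge B j (yt j)).
  { intros j Hj. unfold yt. apply min_in_spec; auto.
    destruct (BS (j - K)) as [H _]. replace (S j) with (S (K + (j - K))) by lia. auto. }
  destruct (min_path_spec B HB K v0 Hv0) as [Hfp Hmp].
  assert (Hy : is_path B (fun j => if Nat.ltb j K then min_path B K v0 j else yt j)).
  { apply (splice_path B K _ v0 _ Hfp).
    - intros j Hj; apply Yne; auto.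
    - intros j Hj. rewrite (proj1 (proj2 (Yne j Hj))). unfold yt.
      replace (S j - K) with (S (j - K)) by lia.
      destruct (BS (S (j - K))) as [_ H]. replace (K + S (j - K)) with (S j) in H by lia. auto.
    - unfold yt. rewrite Nat.sub_diag. destruct (BS 0) as [_ H]. rewrite Nat.add_0_r in H. auto. }
  assert (Hym : all_min B (fun j => if Nat.ltb j K then min_path B K v0 j else yt j)).
  { intros j. destruct (Nat.ltb_spec j K); auto. apply Yne; lia. }
  pose proof (xmin_unique B HP _ Hy Hym K) as E.
  cbv beta in E. rewrite Nat.ltb_irrefl in E.
  pose proof (xmin_src0 B HP Hr K) as E2. rewrite <- E in E2.
  unfold yt in E2. rewrite Nat.sub_diag in E2. destruct (BS 0) as [_ H]. rewrite Nat.add_0_r in H.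
  simpl in E2, H. congruence.
Qed.

Lemma minpath_far B (HP : properly_ordered B) (Hr : forall k, rng B k (xmin B k) = 0) K :
  exists K0, forall l, K0 <= l -> forall w, w < nv B l -> forall j, j < K -> min_path B l w j = xmin B j.
Proof.
  assert (HB : is_ordered_bratteli B) by apply HP.
  destruct (konig B HP Hr K) as [L HL]. exists (Nat.max L (S K)).
  intros l Hl w Hw j Hj. rewrite (prefix_minpath B HB K l w) by (auto; lia).
  rewrite (HL l) by (auto; lia). symmetry. apply xmin_prefix; auto.
Qed.

Lemma vershik_cont B (HP : properly_ordered B) (Hr : forall k, rng B k (xmin B k) = 0) x :
  is_path B x -> forall K, exists K', forall y, is_path B y -> (forall j, j < K' -> y j = x j) ->
    forall j, j < K -> vershik B y j = vershik B x j.
Proof.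
  assert (HB : is_ordered_bratteli B) by apply HP.
  intros Hx K. destruct (classic (all_max B x)) as [Hm|Hm].
  - destruct (minpath_far B HP Hr K) as [K0 HK0]. exists (Nat.max K0 K).
    intros y Hy Hag j Hj. rewrite (vershik_max B x Hm).
    destruct (classic (all_max B y)) as [Hmy|Hmy].
    + rewrite vershik_max; auto.
    + pose proof (fn_spec B y Hmy) as [N1 N2].
      set (k0 := first_nonmax B y) in *.
      assert (Hk0 : Nat.max K0 K <= k0).
      { destruct (le_lt_dec (Nat.max K0 K) k0); auto. exfalso. apply N1. rewrite Hag; auto. }
      rewrite vershik_nonmax by auto. fold k0.
      destruct (Nat.ltb_spec j k0); [|lia].
      destruct Hy as [Hy1 _].
      destruct (succ_spec B k0 (y k0) (Hy1 k0) N1) as [S1 _].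
      apply HK0; try lia. destruct HB as [_ [_ [Hok _]]]. apply (Hok k0 _ S1).
  - pose proof (fn_spec B x Hm) as [N1 N2].
    set (k0 := first_nonmax B x) in *.
    exists (Nat.max (S k0) K). intros y Hy Hag j Hj.
    assert (HF : FN B y k0).
    { split.
      - rewrite Hag by lia. auto.
      - intros i Hi. rewrite Hag by lia. auto. }
    assert (Hmy : ~ all_max B y) by (intros Hc; apply (proj1 HF); apply Hc).
    rewrite (vershik_nonmax B y Hmy), (vershik_nonmax B x Hm). fold k0.
    rewrite (fn_eq B y k0 Hmy HF). rewrite (Hag k0) by lia.
    destruct (Nat.ltb_spec j k0); auto. destruct (Nat.eqb_spec j k0); auto. apply Hag. lia.
Qed.

Lemma iter_cont B (HP : properly_ordered B) (Hr : forall k, rng B k (xmin B k) = 0) n : forall x,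
  is_path B x -> forall K, exists K', forall y, is_path B y -> (forall j, j < K' -> y j = x j) ->
    forall j, j < K -> Nat.iter n (vershik B) y j = Nat.iter n (vershik B) x j.
Proof.
  induction n as [|n IH]; intros x Hx K.
  - exists K. intros y _ H j Hj. simpl. auto.
  - destruct (vershik_cont B HP Hr (Nat.iter n (vershik B) x) (iter_path B HP n x Hx) K) as [K1 HK1].
    destruct (IH x Hx K1) as [K' HK']. exists K'. intros y Hy Hag j Hj. simpl.
    apply HK1; auto. apply iter_path; auto.
Qed.

Definition Rt {X} (T : X -> X) (S : X -> Prop) n := exists x, S x /\ S (Nat.iter n T x).

Lemma iter_comm {X} (T : X -> X) a p x : Nat.iter a T (Nat.iter p T x) = Nat.iter p T (Nat.iter a T x).
Proof. rewrite <- !Nat.iter_add, Nat.add_comm. reflexivity. Qed.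

Ltac fin := match goal with H : ?P (Nat.iter ?m ?T ?w) |- ?P (Nat.iter ?n ?T ?w) =>
  replace n with m by lia; exact H end.

Lemma abstract_wm {X} (T : X -> X) (O : (X -> Prop) -> Prop) (C : nat -> X -> Prop)
 (hF1 : forall S, O S -> (exists x, S x) -> exists L a, forall x, C L x -> S (Nat.iter a T x))
 (hF3 : forall S S' n, O S -> O S' -> O (fun x => S x /\ S' (Nat.iter n T x)))
 (hF2 : forall L, exists p, Rt T (C L) p /\ Rt T (C L) (S p))
 (hmono : forall L L' x, L <= L' -> C L' x -> C L x)
 (hCO : forall L, O (C L)) :
 forall A1 B1 A2 B2, O A1 -> O B1 -> O A2 -> O B2 ->
   (exists x, A1 x) -> (exists x, B1 x) -> (exists x, A2 x) -> (exists x, B2 x) ->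
   exists n, (exists x, A1 x /\ B1 (Nat.iter n T x)) /\ (exists y, A2 y /\ B2 (Nat.iter n T y)).
Proof.
  assert (transfer : forall S L a p, (forall x, C L x -> S (Nat.iter a T x)) -> Rt T (C L) p -> Rt T S p).
  { intros S L a p H [x [H1 H2]]. exists (Nat.iter a T x). split; auto. rewrite iter_comm. auto. }
  assert (big : forall m S, O S -> (exists x, S x) -> exists r, m <= r /\ Rt T S r).
  { induction m as [|m IH]; intros S HO [x0 Hx0].
    - exists 0; split; auto. exists x0; split; auto.
    - destruct (hF1 S HO (ex_intro _ x0 Hx0)) as [L [a Ha]].
      destruct (hF2 L) as [p [_ Hp]].
      destruct (transfer S L a _ Ha Hp) as [x [Hx1 Hx2]].
      destruct (IH (fun x => S x /\ S (Nat.iter (Datatypes.S p) T x)) (hF3 _ _ _ HO HO)) as [r [Hr [z [[Hz1 _] [_ Hz2]]]]].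
      { exists x; auto. }
      exists (Datatypes.S p + r). split; [lia|]. exists z. split; auto. rewrite Nat.iter_add. auto. }
  assert (trans : forall A B', O A -> O B' -> (exists x, A x) -> (exists x, B' x) ->
     exists j z, A z /\ B' (Nat.iter j T z)).
  { intros A B' HA HB' HAn HBn.
    destruct (hF1 A HA HAn) as [L1 [a Ha]]. destruct (hF1 B' HB' HBn) as [L2 [b Hb]].
    set (L := Nat.max L1 L2).
    destruct (hF2 L) as [p [[x0 [Hx0 _]] _]].
    destruct (big a (C L) (hCO L) (ex_intro _ x0 Hx0)) as [r [Hr [x [Hx1 Hx2]]]].
    exists (b + r - a), (Nat.iter a T x). split.
    - apply Ha. apply (hmono L1 L); auto. lia.
    - rewrite <- Nat.iter_add. replace (b + r - a + a) with (b + r) by lia.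
      rewrite Nat.iter_add. apply Hb. apply (hmono L2 L); auto. lia. }
  assert (LD : forall d S, O S -> (exists x, S x) -> exists m, Rt T S m /\ Rt T S (m + d)).
  { induction d as [|d IH]; intros S HO [x0 Hx0].
    - exists 0. rewrite Nat.add_0_r. split; exists x0; split; auto.
    - destruct (hF1 S HO (ex_intro _ x0 Hx0)) as [L [a Ha]].
      destruct (hF2 L) as [p [Hp1 Hp2]].
      pose proof (transfer S L a _ Ha Hp1) as [x1 Hx1].
      pose proof (transfer S L a _ Ha Hp2) as [x2 Hx2].
      set (A := fun x => S x /\ S (Nat.iter p T x)).
      set (Bs := fun x => S x /\ S (Nat.iter (Datatypes.S p) T x)).
      assert (HA : O A) by (apply hF3; auto).
      assert (HBs : O Bs) by (apply hF3; auto).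
      destruct (trans A Bs HA HBs (ex_intro _ x1 Hx1) (ex_intro _ x2 Hx2)) as [j [z [Hz1 Hz2]]].
      set (V := fun x => A x /\ Bs (Nat.iter j T x)).
      assert (HV : O V) by (apply hF3; auto).
      destruct (IH V HV (ex_intro _ z (conj Hz1 Hz2))) as [m [[x [Vx VTx]] [w [Vw VTw]]]].
      exists (m + p). split.
      + exists x. split; [apply Vx|]. destruct VTx as [[_ H] _]. rewrite Nat.add_comm, Nat.iter_add. auto.
      + exists (Nat.iter j T w). split; [apply Vw|].
        destruct VTw as [_ [_ H]]. rewrite <- !Nat.iter_add in H. rewrite <- Nat.iter_add.
        replace (m + p + Datatypes.S d + j) with (Datatypes.S p + (j + (m + d))) by lia. fin. }
  intros A1 B1 A2 B2 HA1 HB1 HA2 HB2 H1 H2 H3 H4.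
  destruct (trans A1 B1 HA1 HB1 H1 H2) as [a [z1 [Hz1 Hz1']]].
  destruct (trans A2 B2 HA2 HB2 H3 H4) as [b [z2 [Hz2 Hz2']]].
  set (A1' := fun x => A1 x /\ B1 (Nat.iter a T x)).
  set (A2' := fun x => A2 x /\ B2 (Nat.iter b T x)).
  assert (O1 : O A1') by (apply hF3; auto).
  assert (O2 : O A2') by (apply hF3; auto).
  destruct (le_lt_dec b a) as [Hab|Hab].
  - destruct (trans A1' A2' O1 O2 (ex_intro _ z1 (conj Hz1 Hz1')) (ex_intro _ z2 (conj Hz2 Hz2'))) as [c [z [Hz Hz']]].
    set (W := fun x => A1' x /\ A2' (Nat.iter c T x)).
    assert (OW : O W) by (apply hF3; auto).
    destruct (LD (a - b) W OW (ex_intro _ z (conj Hz Hz'))) as [m [[x [Wx WTx]] [w [Ww WTw]]]].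
    exists (m + a). split.
    + exists x. split; [apply Wx|]. destruct WTx as [[_ H] _]. rewrite Nat.add_comm, Nat.iter_add. auto.
    + exists (Nat.iter c T w). split; [apply Ww|].
      destruct WTw as [_ [_ H]]. rewrite <- !Nat.iter_add in H. rewrite <- Nat.iter_add.
      replace (m + a + c) with (b + (c + (m + (a - b)))) by lia. fin.
  - destruct (trans A2' A1' O2 O1 (ex_intro _ z2 (conj Hz2 Hz2')) (ex_intro _ z1 (conj Hz1 Hz1'))) as [c [z [Hz Hz']]].
    set (W := fun x => A2' x /\ A1' (Nat.iter c T x)).
    assert (OW : O W) by (apply hF3; auto).
    destruct (LD (b - a) W OW (ex_intro _ z (conj Hz Hz'))) as [m [[x [Wx WTx]] [w [Ww WTw]]]].
    exists (m + b). split.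
    + exists (Nat.iter c T w). split; [apply Ww|].
      destruct WTw as [_ [_ H]]. rewrite <- !Nat.iter_add in H. rewrite <- Nat.iter_add.
      replace (m + b + c) with (a + (c + (m + (b - a)))) by lia. fin.
    + exists x. split; [apply Wx|]. destruct WTx as [[_ H] _]. rewrite Nat.add_comm, Nat.iter_add. auto.
Qed.

Definition OB B (S : (nat -> nat) -> Prop) : Prop :=
  forall x, S x -> is_path B x /\ exists K, forall y, cylinder B K x y -> S y.

Lemma rt_iff {A} (f : A -> A) S z : return_time f S S z <-> Rt f S (Z.abs_nat z).
Proof. unfold return_time, Rt. destruct (Z.leb 0 z); reflexivity. Qed.

Lemma iter_prod {A} (f : A -> A) n a b :
  Nat.iter n (prod_map f) (a, b) = (Nat.iter n f a, Nat.iter n f b).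
Proof. induction n; simpl; auto. rewrite IHn. reflexivity. Qed.

Lemma cyl_O B K u : is_path B u -> OB B (cylinder B K u).
Proof.
  intros Hu x [Hx1 Hx2]. split; auto. exists K. intros y [Hy1 Hy2]. split; auto.
  intros j Hj. rewrite Hy2; auto.
Qed.

Lemma hF1 B (HP : properly_ordered B) (Hr : forall k, rng B k (xmin B k) = 0) S :
  OB B S -> (exists x, S x) -> exists L a, forall x, cylinder B (Datatypes.S L) (xmin B) x ->
     S (Nat.iter a (vershik B) x).
Proof.
  assert (HB : is_ordered_bratteli B) by apply HP.
  intros HO [x0 Hx0]. destruct (HO x0 Hx0) as [Hp0 [K HK]].
  pose proof HP as [HB' [Hsim _]].
  destruct (Hsim K) as [l [Hkl Hcon]].
  assert (Hv : src B K (x0 K) < nv B K).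
  { destruct HB as [_ [_ [Hok _]]]. apply (Hok K _ (proj1 Hp0 K)). }
  assert (H0 : 0 < nv B l) by (destruct HB as [_ [Hpos _]]; apply Hpos).
  destruct (Hcon _ _ Hv H0) as [_ [p [P1 [P2 [P3 P4]]]]].
  set (b := fun j => if Nat.ltb j K then x0 j else p j).
  assert (Hb : fpath B l b 0).
  { destruct Hp0 as [X1 X2]. unfold b. repeat split.
    - intros j Hj. destruct (Nat.ltb_spec j K); [apply X1 | apply P1; lia].
    - intros j Hj. destruct (Nat.ltb_spec j K); destruct (Nat.ltb_spec (Datatypes.S j) K).
      + apply X2.
      + assert (Datatypes.S j = K) as E by lia. rewrite X2, E. auto.
      + lia.
      + apply P4; lia.
    - intros j Hj. destruct (Nat.ltb_spec j K); [lia|]. replace j with (l - 1) by lia. auto.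
    - auto. }
  destruct (tower B HP l 0 b Hb) as [a Ha].
  exists (l - 1), a. intros x [Hx1 Hx2].
  apply HK. split; [apply iter_path; auto|].
  intros j Hj. rewrite Ha; auto.
  - destruct (Nat.ltb_spec j l); [|lia]. unfold b. destruct (Nat.ltb_spec j K); [auto|lia].
  - intros i Hi. rewrite Hx2 by lia. apply xmin_prefix; auto.
Qed.

Lemma hF3 B (HP : properly_ordered B) (Hr : forall k, rng B k (xmin B k) = 0) S S' n :
  OB B S -> OB B S' -> OB B (fun x => S x /\ S' (Nat.iter n (vershik B) x)).
Proof.
  intros HS HS' x [Hx1 Hx2]. destruct (HS x Hx1) as [Hp [K1 HK1]].
  destruct (HS' _ Hx2) as [_ [K2 HK2]].
  destruct (iter_cont B HP Hr n x Hp K2) as [K' HK'].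
  split; auto. exists (Nat.max K1 K'). intros y [Hy1 Hy2]. split.
  - apply HK1. split; auto. intros; apply Hy2; lia.
  - apply HK2. split; [apply iter_path; auto|]. intros j Hj. apply HK'; auto. intros; apply Hy2; lia.
Qed.

Theorem mainTheorem19 (B : Bratteli) :
  properly_ordered B ->
  (forall k, rng B k (xmin B k) = 0) ->
  (weakly_mixing B <->
   forall k, 1 <= k ->
     exists n : Z,
       return_time (vershik B) (cylinder B k (xmin B)) (cylinder B k (xmin B)) n /\
       return_time (vershik B) (cylinder B k (xmin B)) (cylinder B k (xmin B)) (n + 1)%Z).
Proof.
  intros HP Hr.
  assert (HB : is_ordered_bratteli B) by apply HP.
  pose proof (xmin_spec B HP) as [Hxm _].
  split.
  - intros HW k Hk.
    set (C := cylinder B k (xmin B)).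
    assert (Hp : exists p, Rt (vershik B) C p /\ Rt (vershik B) C (Datatypes.S p)).
    { pose proof HP as [_ [_ [[x1 [Hx1 [Hx1m _]]] _]]].
      set (U := fun q : (nat -> nat) * (nat -> nat) => C (fst q) /\ C (snd q)).
      set (W := fun q : (nat -> nat) * (nat -> nat) => C (fst q) /\ is_path B (snd q) /\ C (vershik B (snd q))).
      assert (HCx : C (xmin B)) by (split; auto).
      destruct (HW U W) as [z Hz].
      + split.
        * intros q [[H1 _] [H2 _]]. auto.
        * intros q [[Hq1 Hq1'] [Hq2 Hq2']]. exists k. intros y z [Hy1 Hy2] [Hz1 Hz2]. split; split; auto.
          -- intros j Hj. rewrite Hy2 by auto; auto.
          -- intros j Hj. rewrite Hz2 by auto; auto.
      + split.
        * intros q [[H1 _] [H2 _]]. auto.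
        * intros q [[Hq1 Hq1'] [Hq2 [HT1 HT2]]].
          destruct (vershik_cont B HP Hr (snd q) Hq2 k) as [K' HK'].
          exists (Nat.max k K'). intros y z [Hy1 Hy2] [Hz1 Hz2]. split; [split|split; [auto|split]].
          -- auto.
          -- intros j Hj. rewrite Hy2 by lia; auto.
          -- apply vershik_path; auto.
          -- intros j Hj. rewrite HK'; auto. intros i Hi; apply Hz2; lia.
      + exists (xmin B, xmin B). split; auto.
      + exists (xmin B, x1). split; [exact HCx| split; [exact Hx1| simpl; rewrite vershik_max; [exact HCx | exact Hx1m]]].
      + unfold return_time in Hz. destruct (Z.leb_spec 0 z) as [Hz0|Hz0].
        * destruct Hz as [[a b] [[Ha Hb] HWq]]. rewrite iter_prod in HWq. simpl in *.
          destruct HWq as [W1 [W2 W3]]. exists (Z.abs_nat z). split; [exists a; auto| exists b; split; auto].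
        * destruct Hz as [[a b] [HWq HUq]]. rewrite iter_prod in HUq. simpl in *.
          destruct HWq as [W1 [W2 W3]]; destruct HUq as [U1 U2].
          destruct (Z.abs_nat z) eqn:E; [lia|]. exists n. split.
          -- exists (vershik B b). split; auto. rewrite <- Nat.iter_succ_r; auto.
          -- exists a; auto. }
    destruct Hp as [p [Hp1 Hp2]]. exists (Z.of_nat p). rewrite !rt_iff.
    replace (Z.abs_nat (Z.of_nat p)) with p by lia.
    replace (Z.abs_nat (Z.of_nat p + 1)) with (Datatypes.S p) by lia. auto.
  - intros Hc U W HU HW [[u1 u2] Hu] [[w1 w2] Hw].
    destruct HU as [HU1 HU2]. destruct (HU1 _ Hu) as [Hu1 Hu2]. destruct (HU2 _ Hu) as [K HK].
    destruct HW as [HW1 HW2]. destruct (HW1 _ Hw) as [Hw1 Hw2]. destruct (HW2 _ Hw) as [K2 HK2].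
    simpl in *.
    destruct (abstract_wm (vershik B) (OB B) (fun L => cylinder B (Datatypes.S L) (xmin B))
      (fun S => hF1 B HP Hr S) (fun S S' n => hF3 B HP Hr S S' n))
      with (A1 := cylinder B K u1) (B1 := cylinder B K2 w1) (A2 := cylinder B K u2) (B2 := cylinder B K2 w2)
      as [n [[x [Hx1 Hx2]] [y [Hy1 Hy2]]]].
    + intros L. destruct (Hc (Datatypes.S L) ltac:(lia)) as [z [Hz1 Hz2]].
      rewrite rt_iff in Hz1, Hz2. destruct (Z.leb_spec 0 z).
      * exists (Z.abs_nat z); split; auto.
        replace (Datatypes.S (Z.abs_nat z)) with (Z.abs_nat (z + 1)) by lia; auto.
      * exists (Z.abs_nat (z + 1)); split; auto.
        replace (Datatypes.S (Z.abs_nat (z + 1))) with (Z.abs_nat z) by lia; auto.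
    + intros L L' x HL [H1 H2]; split; auto; intros; apply H2; lia.
    + intros L; apply cyl_O; auto.
    + apply cyl_O; auto.
    + apply cyl_O; auto.
    + apply cyl_O; auto.
    + apply cyl_O; auto.
    + exists u1; split; auto.
    + exists w1; split; auto.
    + exists u2; split; auto.
    + exists w2; split; auto.
    + exists (Z.of_nat n). unfold return_time.
      rewrite (proj2 (Z.leb_le _ _)) by lia. rewrite Zabs2Nat.id.
      exists (x, y). split.
      * apply HK; auto.
      * rewrite iter_prod. apply HK2; auto.
Qed.
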